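(* Let $F(y) = \frac{1}{\sqrt{\pi}} \int_{-y}^{y} e^{-x^2}\,dx$ for $y \ge 0$. Then, as $n \to \infty$, \[ \int_0^\infty (1 - F(y))^n \, dy = \frac{\sqrt{\pi}}{2(n+1)} + o(n^{-2}). \]
   Context: $F$ is the distribution function of $|Z|$ where $Z$ is a centered normal random variable with variance $1/2$. *)

(* Defs.v *)
From Stdlib Require Import Reals.
From Coquelicot Require Import Coquelicot.
Open Scope R_scope.

(* F(y) = (1/sqrt pi) * int_{-y}^{y} exp(-x^2) dx  (distribution function of |Z|,
   Z ~ N(0,1/2)); only used for y >= 0. *)
Definition F (y : R) : R :=
  / sqrt PI * RInt (fun x => exp (- (x ^ 2))) (- y) y.

(* Main.v *)
Require Import Defs.
From Stdlib Require Import Reals Lra Lia Classical_Prop.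
From Coquelicot Require Import Coquelicot.
Open Scope R_scope.

Lemma exRc (f : R -> R) a b : (forall z, Rmin a b <= z <= Rmax a b -> continuous f z) -> ex_RInt f a b.
Proof. intros H. apply (@ex_RInt_continuous R_CompleteNormedModule). exact H. Qed.

Lemma contd (f : R -> R) x : ex_derive f x -> continuous f x.
Proof. apply (@ex_derive_continuous R_AbsRing R_NormedModule f x). Qed.

Definition g (x : R) : R := exp (- (x ^ 2)).

Lemma g_cont x : continuous g x.
Proof. apply contd. unfold g. auto_derive. auto. Qed.

Lemma g_exRInt a b : ex_RInt g a b.
Proof. apply exRc. intros; apply g_cont. Qed.

Definition Phi (y : R) : R := RInt g 0 y.

Lemma Phi_derive y : is_derive Phi y (g y).
Proof.
  apply is_derive_RInt with (a := 0).
  - apply filter_forall. intros b. unfold Phi. apply (@RInt_correct R_CompleteNormedModule). apply g_exRInt.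
  - apply g_cont.
Qed.

Definition uu (x t : R) : R := exp (- (x ^ 2) * (1 + t ^ 2)) / (1 + t ^ 2).

Lemma pos1 t : 0 < 1 + t ^ 2.
Proof. nra. Qed.

Lemma uu_derive x t : is_derive (fun z => uu z t) x ((-2) * x * exp (- (x * x) * (1 + t * t))).
Proof.
  unfold uu. auto_derive; auto.
  replace (x * (x * 1)) with (x * x) by ring. replace (t * (t * 1)) with (t * t) by ring.
  assert (0 < 1 + t * t) by nra. field. lra.
Qed.

Definition dd (u v : R) : R := (-2) * u * exp (- (u * u) * (1 + v * v)).

Lemma dd_cont x t : continuity_2d_pt dd x t.
Proof.
  unfold dd.
  apply (continuity_2d_pt_mult (fun u v => (-2) * u) (fun u v => exp (- (u * u) * (1 + v * v)))).
  - apply (continuity_2d_pt_mult (fun u v => -2) (fun u v => u)).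
    + apply continuity_2d_pt_const.
    + apply continuity_2d_pt_id1.
  - apply (continuity_1d_2d_pt_comp exp (fun u v => - (u * u) * (1 + v * v))).
    + apply derivable_continuous_pt, derivable_pt_exp.
    + apply (continuity_2d_pt_mult (fun u v => - (u * u)) (fun u v => 1 + v * v)).
      * apply (continuity_2d_pt_opp (fun u v => u * u)).
        apply (continuity_2d_pt_mult (fun u v => u) (fun u v => u)); apply continuity_2d_pt_id1.
      * apply (continuity_2d_pt_plus (fun u v => 1) (fun u v => v * v)).
        apply continuity_2d_pt_const.
        apply (continuity_2d_pt_mult (fun u v => v) (fun u v => v)); apply continuity_2d_pt_id2.
Qed.

Lemma Derive_uu u v : Derive (fun z => uu z v) u = dd u v.
Proof. apply is_derive_unique. apply uu_derive. Qed.

Lemma uu_cont x t : continuous (uu x) t.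
Proof. apply contd. unfold uu. auto_derive. generalize (pos1 t); lra. Qed.

Definition A (x : R) : R := RInt (uu x) 0 1.

Lemma A_derive x : is_derive A x (RInt (dd x) 0 1).
Proof.
  assert (H : RInt (dd x) 0 1 = RInt (fun t => Derive (fun u => uu u t) x) 0 1).
  { apply RInt_ext. intros. rewrite Derive_uu. reflexivity. }
  rewrite H. unfold A.
  apply (is_derive_RInt_param uu 0 1 x).
  - apply filter_forall. intros x0 t _. eexists. apply uu_derive.
  - intros t _. apply (continuity_2d_pt_ext dd). intros; symmetry; apply Derive_uu. apply dd_cont.
  - apply filter_forall. intros y. apply exRc. intros; apply uu_cont.
Qed.

Definition K (x : R) : R := RInt (fun y => g (x * y)) 0 1.

Lemma exRc_g_lin x a b : ex_RInt (fun y => g (x * y)) a b.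
Proof. apply exRc. intros. apply contd. unfold g. auto_derive. auto. Qed.

Lemma Phi_K x : Phi x = x * K x.
Proof.
  unfold Phi, K.
  assert (H := RInt_comp_lin g x 0 0 1 (g_exRInt _ _)).
  replace (x * 0 + 0) with 0 in H by ring. replace (x * 1 + 0) with x in H by ring.
  rewrite <- H.
  rewrite <- (RInt_scal (V := R_CompleteNormedModule)) by apply exRc_g_lin.
  apply RInt_ext. intros. replace (x * x0 + 0) with (x * x0) by ring. reflexivity.
Qed.

Lemma dd_K x : RInt (dd x) 0 1 = (-2) * x * exp (- (x * x)) * K x.
Proof.
  unfold K.
  rewrite <- (RInt_scal (V := R_CompleteNormedModule)) by apply exRc_g_lin.
  apply RInt_ext. intros t _. unfold dd, g. cbn -[exp]. unfold mult; cbn -[exp].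
  rewrite (Rmult_assoc (-2 * x)). rewrite <- exp_plus. f_equal. f_equal. ring.
Qed.

Definition h (x : R) : R := A x + Phi x * Phi x.

Lemma h_derive x : is_derive h x 0.
Proof.
  unfold h.
  evar (l : R). replace 0 with l.
  apply (is_derive_plus (K := R_AbsRing) (V := R_NormedModule)). apply A_derive.
  apply (is_derive_mult (K := R_AbsRing)). apply Phi_derive. apply Phi_derive.
  intros; apply Rmult_comm.
  unfold l. rewrite dd_K, Phi_K. unfold g. cbn -[exp K]. unfold plus, mult; cbn -[exp K].
  rewrite !Rmult_1_r. ring.
Qed.

Lemma exp_le x y : x <= y -> exp x <= exp y.
Proof. intros [H|H]. apply Rlt_le, exp_increasing; auto. subst; lra. Qed.

Lemma der_contpt f x l : is_derive f x l -> continuity_pt f x.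
Proof. intros H. apply continuity_pt_filterlim. apply contd. eexists; eauto. Qed.

Lemma const_of_deriv0 f : (forall x, is_derive f x 0) -> forall x y, f x = f y.
Proof.
  intros H x y. destruct (MVT_gen f y x (fun _ => 0)) as [c [_ Hc]].
  - intros; apply H.
  - intros; eapply der_contpt; apply H.
  - lra.
Qed.

Lemma h0 : h 0 = PI / 4.
Proof.
  unfold h, Phi. replace (RInt g 0 0) with 0 by (rewrite RInt_point; reflexivity). rewrite Rmult_0_r, Rplus_0_r.
  unfold A. rewrite <- atan_1.
  replace (atan 1) with (atan 1 - atan 0) by (rewrite atan_0; ring).
  apply is_RInt_unique.
  apply (is_RInt_ext (fun t => / (1 + t^2))).
  - intros t _. unfold uu. replace (- (0 ^ 2) * (1 + t ^ 2)) with 0 by ring. rewrite exp_0. change (@eq R (/ (1 + t ^ 2)) (1 / (1 + t ^ 2))). unfold Rdiv; ring.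
  - apply (is_RInt_derive (V := R_CompleteNormedModule) atan).
    + intros. apply is_derive_Reals. apply derivable_pt_lim_atan.
    + intros. apply contd. auto_derive. generalize (pos1 x); lra.
Qed.

Lemma A_bounds x : 0 <= A x <= exp (- (x ^ 2)).
Proof.
  unfold A. split.
  - apply RInt_ge_0. lra. apply exRc; intros; apply uu_cont.
    intros t _. unfold uu. generalize (pos1 t) (exp_pos (- x ^ 2 * (1 + t ^ 2))). intros. apply Rlt_le, Rdiv_lt_0_compat; lra.
  - replace (exp (- x ^ 2)) with (RInt (fun _ => exp (- x ^ 2)) 0 1).
    apply RInt_le. lra. apply exRc; intros; apply uu_cont.
    apply exRc; intros; apply continuous_const.
    intros t Ht. unfold uu.
    assert (E : exp (- x ^ 2 * (1 + t ^ 2)) <= exp (- x ^ 2)).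
    { apply exp_le. nra. }
    assert (I : / (1 + t ^ 2) <= 1).
    { rewrite <- Rinv_1. apply Rinv_le_contravar. lra. nra. }
    generalize (exp_pos (- x ^ 2 * (1 + t ^ 2))); intros.
    unfold Rdiv. nra.
    rewrite RInt_const. unfold scal; cbn. unfold mult; cbn. ring.
Qed.


Lemma Phi_sq x : Phi x * Phi x = PI / 4 - A x.
Proof.
  assert (H := const_of_deriv0 h h_derive x 0). rewrite h0 in H. unfold h in H. lra.
Qed.

Lemma g_pos x : 0 < g x.
Proof. apply exp_pos. Qed.

Lemma Phi_ge0 x : 0 <= x -> 0 <= Phi x.
Proof. intros. apply RInt_ge_0; auto. apply g_exRInt. intros; apply Rlt_le, g_pos. Qed.

Definition c : R := sqrt PI.

Lemma c_pos : 0 < c.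
Proof. apply sqrt_lt_R0, PI_RGT_0. Qed.

Lemma c_sq : c * c = PI.
Proof. apply sqrt_sqrt. generalize PI_RGT_0; lra. Qed.

Lemma Phi_close x : 0 <= x -> Rabs (Phi x - c / 2) <= 2 / c * exp (- (x ^ 2)).
Proof.
  intros Hx. generalize (Phi_sq x) (A_bounds x) (Phi_ge0 x Hx) c_pos c_sq; intros H1 H2 H3 H4 H5.
  assert (E : (Phi x - c/2) * (Phi x + c/2) = - A x) by nra.
  assert (P : 0 < Phi x + c / 2) by lra.
  assert (E2 : Phi x - c/2 = - A x / (Phi x + c/2)).
  { apply (Rmult_eq_reg_r (Phi x + c/2)); [|lra]. unfold Rdiv. rewrite Rmult_assoc, Rinv_l by lra. lra. }
  rewrite E2. rewrite Rabs_div by lra. rewrite Rabs_Ropp, Rabs_pos_eq by lra. rewrite Rabs_pos_eq by lra.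
  unfold Rdiv. apply Rle_trans with (A x * / (c/2)).
  apply Rmult_le_compat_l. lra. apply Rinv_le_contravar; lra.
  replace (A x * / (c / 2)) with (2 / c * A x) by (field; lra).
  apply Rmult_le_compat_l. apply Rlt_le, Rdiv_lt_0_compat; lra. lra.
Qed.

Lemma RInt_sym y : RInt g (- y) y = 2 * Phi y.
Proof.
  rewrite <- (RInt_Chasles (V := R_CompleteNormedModule) g (-y) 0 y) by apply g_exRInt.
  assert (H := RInt_comp_lin g (-1) 0 0 y (g_exRInt _ _)).
  replace (-1 * 0 + 0) with 0 in H by ring. replace (-1 * y + 0) with (-y) in H by ring.
  assert (H2 : RInt (fun t => scal (-1) (g (-1 * t + 0))) 0 y = - Phi y).
  { unfold Phi. rewrite (RInt_ext _ (fun t => scal (-1) (g t))).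
    rewrite (RInt_scal (V := R_CompleteNormedModule)) by apply g_exRInt. unfold scal; cbn; unfold mult; cbn. ring.
    intros t _. unfold g. f_equal. f_equal. f_equal. ring. }
  assert (H3 : RInt g 0 (- y) = - Phi y) by (rewrite <- H2; symmetry; exact H).
  rewrite <- (opp_RInt_swap (V := R_CompleteNormedModule)) by apply g_exRInt.
  rewrite H3. unfold plus, opp; cbn. unfold Phi. ring.
Qed.

Definition G (y : R) : R := 1 - F y.

Lemma G_Phi y : G y = 1 - 2 / c * Phi y.
Proof. unfold G, F. rewrite RInt_sym. fold c. field. generalize c_pos; lra. Qed.

Lemma G_derive y : is_derive G y (- (2 / c) * g y).
Proof.
  assert (H := is_derive_minus (K := R_AbsRing) (V := R_NormedModule) (fun _ => 1) (fun y => 2 / c * Phi y) y _ _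
     (is_derive_const (K := R_AbsRing) (V := R_NormedModule) 1 y) (is_derive_scal Phi y (2 / c) _ (Phi_derive y))).
  replace (- (2 / c) * g y) with (minus (zero : R) (2 / c * g y)) by (unfold minus, plus, opp, zero; cbn; ring).
  revert H. apply is_derive_ext. intros t. rewrite G_Phi. unfold minus, plus, opp; cbn. ring.
Qed.

Lemma G_close y : 0 <= y -> Rabs (G y) <= 4 / PI * exp (- (y ^ 2)).
Proof.
  intros Hy. rewrite G_Phi. generalize (Phi_close y Hy) c_pos c_sq; intros H Hc Hs.
  replace (1 - 2 / c * Phi y) with (- (2 / c) * (Phi y - c / 2)) by (field; lra).
  rewrite Rabs_mult, Rabs_Ropp, Rabs_pos_eq by (apply Rlt_le, Rdiv_lt_0_compat; lra).
  replace (4 / PI * exp (- y ^ 2)) with (2 / c * (2 / c * exp (- y ^ 2))) by (rewrite <- Hs; field; lra).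
  apply Rmult_le_compat_l. apply Rlt_le, Rdiv_lt_0_compat; lra. exact H.
Qed.

Lemma exp_neg_sq_le y : 0 < y -> exp (- (y ^ 2)) <= / y.
Proof.
  intros Hy. generalize (exp_ineq1_le (y ^ 2)) (exp_pos (y^2)); intros H1 H2.
  rewrite exp_Ropp. apply Rinv_le_contravar; nra.
Qed.

Lemma G_lim : filterlim G (Rbar_locally p_infty) (locally 0).
Proof.
  intros P [eps Heps]. exists (Rmax 1 (4 / PI / eps)). intros y Hy.
  apply Heps. unfold ball; cbn. unfold AbsRing_ball, abs, minus, plus, opp; cbn.
  rewrite Ropp_0, Rplus_0_r.
  generalize (Rmax_l 1 (4 / PI / eps)) (Rmax_r 1 (4 / PI / eps)) (cond_pos eps) PI_RGT_0; intros H1 H2 He Hp.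
  eapply Rle_lt_trans. apply G_close. lra.
  assert (y > 0) by lra.
  apply Rle_lt_trans with (4 / PI * / y).
  apply Rmult_le_compat_l. apply Rlt_le, Rdiv_lt_0_compat; lra. apply exp_neg_sq_le; lra.
  assert (4 / PI / eps < y) by lra.
  apply (Rmult_lt_compat_r eps) in H0; auto. unfold Rdiv in H0 |- *.
  rewrite Rmult_assoc, Rinv_l in H0 by lra.
  apply (Rmult_lt_reg_r y). lra. rewrite Rmult_assoc, Rinv_l by lra. lra.
Qed.

Lemma lim0_eps f : filterlim f (Rbar_locally p_infty) (locally 0) ->
  forall eps, 0 < eps -> exists M, forall y, M < y -> Rabs (f y) < eps.
Proof.
  intros H eps He. destruct (H (fun z => Rabs z < eps)) as [M HM].
  exists (mkposreal eps He). intros z Hz. unfold ball in Hz; cbn in Hz.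
  unfold AbsRing_ball, abs, minus, plus, opp in Hz; cbn in Hz. rewrite Ropp_0, Rplus_0_r in Hz. exact Hz.
  exists M. exact HM.
Qed.

Lemma eps_lim0 f : (forall eps, 0 < eps -> exists M, forall y, M < y -> Rabs (f y) < eps) ->
  filterlim f (Rbar_locally p_infty) (locally 0).
Proof.
  intros H P [eps Heps]. destruct (H eps (cond_pos eps)) as [M HM]. exists M.
  intros y Hy. apply Heps. unfold ball; cbn. unfold AbsRing_ball, abs, minus, plus, opp; cbn.
  rewrite Ropp_0, Rplus_0_r. apply HM; auto.
Qed.

Lemma nonneg_of_decr f df : (forall t, is_derive f t (df t)) -> (forall t, df t <= 0) ->
  filterlim f (Rbar_locally p_infty) (locally 0) -> forall y, 0 <= f y.
Proof.
  intros Hd Hn Hl y. destruct (Rle_lt_dec 0 (f y)) as [H|H]; auto. exfalso.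
  destruct (lim0_eps f Hl (- f y)) as [M HM]. lra.
  set (z := Rmax (M + 1) (y + 1)).
  assert (Hz1 : M < z) by (unfold z; generalize (Rmax_l (M+1) (y+1)); lra).
  assert (Hz2 : y < z) by (unfold z; generalize (Rmax_r (M+1) (y+1)); lra).
  destruct (MVT_gen f y z df) as [xi [_ Hxi]].
  - intros; apply Hd.
  - intros; eapply der_contpt; apply Hd.
  - specialize (HM z Hz1). generalize (Hn xi); intros.
    assert (f z - f y <= 0) by (rewrite Hxi; nra).
    apply Rabs_def2 in HM. lra.
Qed.

Lemma G_nonneg y : 0 <= G y.
Proof.
  apply (nonneg_of_decr G (fun t => - (2 / c) * g t)).
  - apply G_derive.
  - intros t. generalize (g_pos t) c_pos; intros. assert (0 < 2 / c) by (apply Rdiv_lt_0_compat; lra). nra.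
  - apply G_lim.
Qed.

Lemma G0 : G 0 = 1.
Proof. rewrite G_Phi. unfold Phi. rewrite RInt_point. unfold zero; cbn. ring. Qed.

Lemma c_le2 : c <= 2.
Proof. generalize c_sq c_pos PI_4; intros. nra. Qed.

Lemma c_ge1 : 1 <= c.
Proof. generalize c_sq c_pos PI2_3_2; intros. nra. Qed.

Lemma G_le_exp_01 y : 0 <= y <= 1 -> G y <= exp (- y).
Proof.
  intros Hy. destruct (Req_dec y 0) as [->|Hy0].
  { rewrite G0, Ropp_0, exp_0. lra. }
  set (k := fun t => exp (- t) - G t).
  destruct (MVT_gen k 0 y (fun t => - exp (- t) - (- (2 / c) * g t))) as [xi [Hxi E]].
  - intros x _. unfold k. apply (is_derive_minus (K := R_AbsRing) (V := R_NormedModule)).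
    auto_derive; auto. unfold Rminus; ring_simplify; ring. apply G_derive.
  - intros x _. eapply der_contpt. unfold k. apply (is_derive_minus (K := R_AbsRing) (V := R_NormedModule)).
    auto_derive; auto. apply G_derive.
  - rewrite Rmin_left in Hxi by lra. rewrite Rmax_right in Hxi by lra.
    unfold k in E. rewrite G0, Ropp_0, exp_0 in E.
    assert (D : 0 <= - exp (- xi) - (- (2 / c) * g xi)).
    { unfold g. generalize c_le2 c_pos; intros.
      assert (exp (- xi) <= exp (- xi ^ 2)) by (apply exp_le; nra).
      assert (1 <= 2 / c) by (apply (Rmult_le_reg_r c); [lra|]; unfold Rdiv; rewrite Rmult_assoc, Rinv_l; lra).
      generalize (exp_pos (- xi)); intros. nra. }
    nra.
Qed.

Lemma exp_lin_lim0 : filterlim (fun y => exp (1 - 2 * y) / c) (Rbar_locally p_infty) (locally 0).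
Proof.
  apply eps_lim0. intros eps He. exists (Rmax 1 (/ eps)). intros y Hy.
  generalize (Rmax_l 1 (/ eps)) (Rmax_r 1 (/ eps)) c_ge1; intros H1 H2 Hc.
  rewrite Rabs_pos_eq by (apply Rlt_le, Rdiv_lt_0_compat; [apply exp_pos|lra]).
  assert (E : exp (1 - 2 * y) <= / y).
  { replace (1 - 2 * y) with (- (2 * y - 1)) by ring. rewrite exp_Ropp.
    apply Rinv_le_contravar. lra. generalize (exp_ineq1_le (2 * y - 1)); lra. }
  apply Rle_lt_trans with (/ y).
  - unfold Rdiv. apply Rle_trans with (exp (1 - 2 * y) * 1).
    apply Rmult_le_compat_l. apply Rlt_le, exp_pos. rewrite <- Rinv_1. apply Rinv_le_contravar; lra. lra.
  - assert (/ eps < y) by lra. apply (Rinv_lt_contravar) in H. rewrite Rinv_inv in H. exact H.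
    apply Rmult_lt_0_compat. apply Rinv_0_lt_compat; lra. lra.
Qed.

Lemma k2_nonneg y : G y <= exp (1 - 2 * y) / c.
Proof.
  cut (0 <= exp (1 - 2 * y) / c - G y). lra.
  apply (nonneg_of_decr (fun y => exp (1 - 2 * y) / c - G y) (fun t => (-2) * exp (1 - 2 * t) / c - (- (2 / c) * g t))).
  - intros t. apply (is_derive_minus (K := R_AbsRing) (V := R_NormedModule) (fun y => exp (1 - 2 * y) / c) G).
    auto_derive; auto. unfold Rminus, Rdiv; ring. apply G_derive.
  - intros t. unfold g. generalize c_pos; intros.
    assert (exp (- t ^ 2) <= exp (1 - 2 * t)) by (apply exp_le; generalize (Rle_0_sqr (t - 1)); unfold Rsqr; intros; nra).
    assert (0 < 2 / c) by (apply Rdiv_lt_0_compat; lra).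
    replace ((-2) * exp (1 - 2 * t) / c - - (2 / c) * exp (- t ^ 2)) with (2 / c * (exp (- t ^ 2) - exp (1 - 2 * t))) by (unfold Rdiv; ring).
    apply Rmult_le_0_l; lra.
  - apply eps_lim0. intros eps He.
    destruct (lim0_eps _ exp_lin_lim0 (eps / 2)) as [M1 H1]. lra.
    destruct (lim0_eps _ G_lim (eps / 2)) as [M2 H2]. lra.
    exists (Rmax M1 M2). intros z Hz.
    generalize (Rmax_l M1 M2) (Rmax_r M1 M2); intros.
    assert (Ha : M1 < z) by lra. assert (Hb : M2 < z) by lra.
    specialize (H1 z Ha). specialize (H2 z Hb).
    assert (T := Rabs_triang (exp (1 - 2 * z) / c) (- G z)). rewrite Rabs_Ropp in T.
    change (Rabs (exp (1 - 2 * z) / c + - G z) < eps). lra.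
Qed.

Lemma G_le_exp y : 0 <= y -> G y <= exp (- y).
Proof.
  intros Hy. destruct (Rle_lt_dec y 1) as [H|H].
  - apply G_le_exp_01; lra.
  - eapply Rle_trans. apply k2_nonneg.
    generalize c_ge1 (exp_pos (1 - 2 * y)); intros.
    apply Rle_trans with (exp (1 - 2 * y)).
    + unfold Rdiv. apply Rle_trans with (exp (1 - 2 * y) * 1).
      apply Rmult_le_compat_l. lra. rewrite <- Rinv_1. apply Rinv_le_contravar; lra. lra.
    + apply exp_le; lra.
Qed.

Lemma G_cont y : continuous G y.
Proof. apply contd. eexists. apply G_derive. Qed.

Lemma Gn_cont n y : continuous (fun y => G y ^ n) y.
Proof. apply contd. eexists. apply is_derive_pow. apply G_derive. Qed.

Lemma cont_mult (f1 f2 : R -> R) y : continuous f1 y -> continuous f2 y -> continuous (fun y => f1 y * f2 y) y.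
Proof. intros. apply (continuous_mult (K := R_AbsRing) f1 f2); auto. Qed.

Lemma g1_cont y : continuous (fun y => 1 - g y) y.
Proof. apply contd. unfold g. auto_derive. auto. Qed.

Definition Jn (n : nat) (b : R) := RInt (fun y => G y ^ n * g y) 0 b.
Definition Dn (n : nat) (b : R) := RInt (fun y => G y ^ n * (1 - g y)) 0 b.
Definition In (n : nat) (b : R) := RInt (fun y => (1 - F y) ^ n) 0 b.

Lemma exJ n a b : ex_RInt (fun y => G y ^ n * g y) a b.
Proof. apply exRc. intros. apply cont_mult. apply Gn_cont. apply g_cont. Qed.
Lemma exD n a b : ex_RInt (fun y => G y ^ n * (1 - g y)) a b.
Proof. apply exRc. intros. apply cont_mult. apply Gn_cont. apply g1_cont. Qed.

Lemma plusR (a b : R) : plus a b = a + b. Proof. reflexivity. Qed.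
Lemma multR (a b : R) : mult a b = a * b. Proof. reflexivity. Qed.
Lemma scalR (a b : R) : scal a b = a * b. Proof. reflexivity. Qed.
Lemma minusR (a b : R) : minus a b = a - b. Proof. reflexivity. Qed.
Lemma oppR (a : R) : opp a = - a. Proof. reflexivity. Qed.
Lemma zeroR : (zero : R) = 0. Proof. reflexivity. Qed.

Lemma RInt_plusR (f1 f2 : R -> R) a b : ex_RInt f1 a b -> ex_RInt f2 a b ->
  RInt (fun x => f1 x + f2 x) a b = RInt f1 a b + RInt f2 a b.
Proof.
  intros H1 H2. apply is_RInt_unique.
  apply (is_RInt_plus (V := R_NormedModule) f1 f2); apply (RInt_correct (V := R_CompleteNormedModule)); auto.
Qed.

Lemma RInt_extR (f1 f2 : R -> R) a b : (forall x, Rmin a b < x < Rmax a b -> @eq R (f1 x) (f2 x)) ->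
  RInt f1 a b = RInt f2 a b.
Proof. intros H. apply RInt_ext. exact H. Qed.

Lemma In_split n b : In n b = Jn n b + Dn n b.
Proof.
  unfold In, Jn, Dn.
  transitivity (RInt (fun x => G x ^ n * g x + G x ^ n * (1 - g x)) 0 b).
  - apply RInt_extR. intros. unfold G. ring.
  - apply RInt_plusR. apply exJ. apply exD.
Qed.

Lemma RInt_derR (f df : R -> R) a b : (forall x, is_derive f x (df x)) -> (forall x, continuous df x) ->
  RInt df a b = f b - f a.
Proof.
  intros H1 H2. apply is_RInt_unique.
  apply (is_RInt_derive (V := R_CompleteNormedModule) f df); intros; auto.
Qed.

Ltac toR := match goal with |- ?a = ?b => change (@eq R a b) end.

Lemma is_derive_eqR (f : R -> R) x (l1 l2 : R) : is_derive f x l1 -> l1 = l2 -> is_derive f x l2.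
Proof. intros H ->; exact H. Qed.

Lemma Jn_val n b : Jn n b = c / 2 * (1 - G b ^ (S n)) / (INR n + 1).
Proof.
  unfold Jn.
  set (H := fun y => - (c / 2) / (INR n + 1) * G y ^ (S n)).
  assert (Hn : 0 < INR n + 1) by (generalize (pos_INR n); lra).
  rewrite (RInt_derR H).
  - toR. unfold H. rewrite G0, pow1. field. lra.
  - intros x. unfold H.
    assert (D := is_derive_pow G (S n) x _ (G_derive x)).
    assert (D2 := is_derive_scal _ x (- (c / 2) / (INR n + 1)) _ D).
    apply (is_derive_eqR _ _ _ _ D2).
    generalize c_pos; intros. rewrite S_INR. simpl Init.Nat.pred. field. lra.
  - intros. apply cont_mult. apply Gn_cont. apply g_cont.
Qed.

Lemma RInt_ChaslesR (f : R -> R) a b d : ex_RInt f a b -> ex_RInt f b d ->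
  RInt f a b + RInt f b d = RInt f a d.
Proof. intros. apply (RInt_Chasles (V := R_CompleteNormedModule)); auto. Qed.

Lemma g_le1 y : g y <= 1.
Proof. unfold g. rewrite <- exp_0. apply exp_le. generalize (pow2_ge_0 y); lra. Qed.

Lemma one_g_le y : 1 - g y <= y ^ 2.
Proof. unfold g. generalize (exp_ineq1_le (- y ^ 2)); lra. Qed.

Lemma integ_nonneg n y : 0 <= G y ^ n * (1 - g y).
Proof. apply Rmult_le_pos. apply pow_le, G_nonneg. generalize (g_le1 y); lra. Qed.

Lemma Dn_mono n x y : 0 <= x <= y -> Dn n x <= Dn n y.
Proof.
  intros H. unfold Dn. rewrite <- (RInt_ChaslesR _ 0 x y) by apply exD.
  assert (0 <= RInt (fun y => G y ^ n * (1 - g y)) x y).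
  { apply RInt_ge_0. lra. apply exD. intros; apply integ_nonneg. }
  lra.
Qed.

Lemma Dn0 n : Dn n 0 = 0.
Proof. unfold Dn. rewrite RInt_point. reflexivity. Qed.

Lemma exp_pow y n : exp (- y) ^ n = exp (- (INR n * y)).
Proof.
  induction n. simpl. rewrite Rmult_0_l, Ropp_0, exp_0. reflexivity.
  simpl pow. rewrite IHn, <- exp_plus. f_equal. rewrite S_INR. ring.
Qed.

Definition Kf (m y : R) := - exp (- (m * y)) * (y ^ 2 / m + 2 * y / m ^ 2 + 2 / m ^ 3).

Lemma Kf_derive m y : 0 < m -> is_derive (Kf m) y (exp (- (m * y)) * y ^ 2).
Proof.
  intros Hm. unfold Kf. auto_derive. auto. field. lra.
Qed.

Lemma Dn_bound n b : (1 <= n)%nat -> 0 <= b -> Dn n b <= 2 / INR n ^ 3.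
Proof.
  intros Hn Hb. assert (Hm : 0 < INR n) by (apply lt_0_INR; lia).
  apply Rle_trans with (RInt (fun y => exp (- (INR n * y)) * y ^ 2) 0 b).
  - apply RInt_le. auto. apply exD.
    apply exRc. intros. apply contd. auto_derive. auto.
    intros y Hy. rewrite <- exp_pow. apply Rmult_le_compat.
    apply pow_le, G_nonneg. generalize (g_le1 y); lra.
    apply pow_incr. split. apply G_nonneg. apply G_le_exp. lra.
    apply one_g_le.
  - rewrite (RInt_derR (Kf (INR n))).
    + unfold Kf. generalize (exp_pos (- (INR n * b))) (exp_pos (- (INR n * 0))); intros.
      assert (0 <= b ^ 2 / INR n + 2 * b / INR n ^ 2 + 2 / INR n ^ 3).
      { apply Rplus_le_le_0_compat. apply Rplus_le_le_0_compat.
        apply Rdiv_le_0_compat. apply pow2_ge_0. auto.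
        apply Rdiv_le_0_compat. lra. apply pow_lt; lra.
        apply Rlt_le, Rdiv_lt_0_compat. lra. apply pow_lt; lra. }
      replace (INR n * 0) with 0 by ring. rewrite Ropp_0, exp_0.
      replace (0 ^ 2 / INR n + 2 * 0 / INR n ^ 2 + 2 / INR n ^ 3) with (2 / INR n ^ 3) by (field; lra).
      assert (0 <= exp (- (INR n * b)) * (b ^ 2 / INR n + 2 * b / INR n ^ 2 + 2 / INR n ^ 3)) by (apply Rmult_le_pos; lra).
      lra.
    + intros. apply Kf_derive. auto.
    + intros. apply contd. auto_derive. auto.
Qed.

Lemma mono_lim (D : R -> R) B : (forall x y, 0 <= x <= y -> D x <= D y) -> (forall x, 0 <= x -> D x <= B) ->
  exists L, D 0 <= L <= B /\ forall eps, 0 < eps -> exists M, forall y, M < y -> Rabs (D y - L) < eps.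
Proof.
  intros Hm Hb.
  set (E := fun v => exists x, 0 <= x /\ v = D x).
  destruct (completeness E) as [m [Hub Hlub]].
  - exists B. intros v [x [Hx ->]]. apply Hb; auto.
  - exists (D 0). exists 0. split; auto. lra.
  - exists m. split. split.
    + apply Hub. exists 0; split; auto; lra.
    + apply Hlub. intros v [x [Hx ->]]. apply Hb; auto.
    + intros eps He.
      destruct (Classical_Prop.classic (exists x, 0 <= x /\ m - eps < D x)) as [[x [Hx Hx2]]|Hn].
      * exists x. intros y Hy. assert (D y <= m) by (apply Hub; exists y; split; auto; lra).
        assert (D x <= D y) by (apply Hm; lra).
        apply Rabs_def1; lra.
      * exfalso. assert (m <= m - eps); [|lra].
        apply Hlub. intros v [x [Hx ->]].
        destruct (Rle_lt_dec (D x) (m - eps)); auto. exfalso; apply Hn. exists x; auto.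
Qed.

Lemma eps_is_lim (f : R -> R) (l : R) : (forall eps, 0 < eps -> exists M, forall y, M < y -> Rabs (f y - l) < eps) ->
  is_lim f p_infty l.
Proof.
  intros H P [eps Heps]. destruct (H eps (cond_pos eps)) as [M HM]. exists M.
  intros y Hy. apply Heps. apply HM; auto.
Qed.

Lemma gen_of_lim (f : R -> R) (l : R) : is_lim (fun b => RInt f 0 b) p_infty l -> (forall a b, ex_RInt f a b) ->
  is_RInt_gen f (at_point 0) (Rbar_locally p_infty) l.
Proof.
  intros Hl He. unfold is_RInt_gen.
  apply (filterlimi_lim_ext (fun ab => RInt f (fst ab) (snd ab))).
  - intros ab. apply (RInt_correct (V := R_CompleteNormedModule)). apply He.
  - intros P HP. destruct (Hl P HP) as [M HM].
    apply Filter_prod with (Q := fun x => x = 0) (R := fun y => M < y).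
    + reflexivity.
    + exists M. auto.
    + intros x y -> Hy. cbn. apply HM. auto.
Qed.

Lemma G_le1 y : 0 <= y -> G y <= 1.
Proof. intros. eapply Rle_trans. apply G_le_exp; auto. rewrite <- exp_0. apply exp_le. lra. Qed.

Lemma In_lim n : (1 <= n)%nat -> exists L, 0 <= L <= 2 / INR n ^ 3 /\
  is_lim (In n) p_infty (c / (2 * (INR n + 1)) + L).
Proof.
  intros Hn.
  destruct (mono_lim (Dn n) (2 / INR n ^ 3) (fun x y H => Dn_mono n x y H) (fun x H => Dn_bound n x Hn H)) as [L [HL1 HL2]].
  rewrite Dn0 in HL1.
  exists L. split; auto. apply eps_is_lim. intros eps He.
  destruct (HL2 (eps / 2)) as [M1 H1]. lra.
  assert (Hc : 0 < c / 2) by (generalize c_pos; lra).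
  destruct (lim0_eps G G_lim (eps / 2 / (c / 2))) as [M2 H2]. apply Rdiv_lt_0_compat; lra.
  exists (Rmax 0 (Rmax M1 M2)). intros y Hy.
  generalize (Rmax_l 0 (Rmax M1 M2)) (Rmax_r 0 (Rmax M1 M2)) (Rmax_l M1 M2) (Rmax_r M1 M2); intros.
  assert (Ha : M1 < y) by lra. assert (Hb : M2 < y) by lra.
  specialize (H1 y Ha). specialize (H2 y Hb).
  rewrite In_split, Jn_val.
  assert (Hn1 : 0 < INR n + 1) by (generalize (pos_INR n); lra).
  replace (c / 2 * (1 - G y ^ S n) / (INR n + 1) + Dn n y - (c / (2 * (INR n + 1)) + L))
    with ((Dn n y - L) + - (c / 2 * (G y ^ S n / (INR n + 1)))) by (field; lra).
  assert (T := Rabs_triang (Dn n y - L) (- (c / 2 * (G y ^ S n / (INR n + 1))))).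
  rewrite Rabs_Ropp in T.
  assert (Gy0 := G_nonneg y). assert (Gy1 := G_le1 y ltac:(lra)).
  assert (B : Rabs (c / 2 * (G y ^ S n / (INR n + 1))) <= c / 2 * G y).
  { rewrite Rabs_pos_eq.
    apply Rmult_le_compat_l. lra.
    assert (G y ^ S n <= G y).
    { simpl. assert (G y ^ n <= 1) by (rewrite <- (pow1 n); apply pow_incr; lra).
      assert (0 <= G y ^ n) by (apply pow_le; lra). nra. }
    assert (1 <= INR n + 1) by (generalize (pos_INR n); lra).
    unfold Rdiv. assert (0 <= G y ^ S n) by (apply pow_le; lra).
    assert (/ (INR n + 1) <= 1) by (rewrite <- Rinv_1; apply Rinv_le_contravar; lra).
    nra.
    apply Rmult_le_pos. lra. apply Rdiv_le_0_compat. apply pow_le; lra. lra. }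
  rewrite Rabs_pos_eq in H2 by lra.
  assert (c / 2 * G y < eps / 2).
  { apply (Rmult_lt_compat_l (c / 2)) in H2; auto. replace (c / 2 * (eps / 2 / (c / 2))) with (eps / 2) in H2 by (field; lra). exact H2. }
  lra.
Qed.

Definition Ifun (n : nat) : R := real (Lim (In n) p_infty).

Lemma Ifun_val n : (1 <= n)%nat -> exists L, 0 <= L <= 2 / INR n ^ 3 /\
  Ifun n = c / (2 * (INR n + 1)) + L /\ is_lim (In n) p_infty (Ifun n).
Proof.
  intros Hn. destruct (In_lim n Hn) as [L [HL Hl]].
  assert (E : Ifun n = c / (2 * (INR n + 1)) + L).
  { unfold Ifun. rewrite (is_lim_unique _ _ _ Hl). reflexivity. }
  exists L. split; auto. split; auto. rewrite E. exact Hl.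
Qed.

Theorem theorem2 :
  exists I : nat -> R,
    (forall n : nat, (1 <= n)%nat ->
       is_RInt_gen (fun y => (1 - F y) ^ n)
         (at_point 0) (Rbar_locally p_infty) (I n)) /\
    is_lim_seq (fun n : nat => (I n - sqrt PI / (2 * (INR n + 1))) * INR n ^ 2) 0.
Proof.
  exists Ifun. split.
  - intros n Hn. destruct (Ifun_val n Hn) as [L [_ [_ Hl]]].
    apply gen_of_lim. exact Hl.
    intros a b. apply exRc. intros. apply (Gn_cont n z).
  - apply is_lim_seq_le_le_loc with (u := fun _ => 0) (w := fun n => 2 * / INR n).
    + exists 1%nat. intros n Hn. destruct (Ifun_val n Hn) as [L [HL [E _]]].
      fold c. rewrite E.
      assert (Hm : 0 < INR n) by (apply lt_0_INR; lia).
      replace (c / (2 * (INR n + 1)) + L - c / (2 * (INR n + 1))) with L by ring.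
      split. apply Rmult_le_pos. lra. apply pow_le; lra.
      apply Rle_trans with (2 / INR n ^ 3 * INR n ^ 2).
      apply Rmult_le_compat_r. apply pow_le; lra. lra.
      right. field. lra.
    + apply is_lim_seq_const.
    + replace (Finite 0) with (Rbar_mult 2 (Rbar_inv p_infty)) by (simpl; f_equal; ring).
      apply is_lim_seq_scal_l. apply is_lim_seq_inv. apply is_lim_seq_INR. discriminate.
Qed.
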